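(* Let $D$ be an integral domain, $S$ a multiplicative subset of $D$, and $M$ a torsion-free $D$-module which is a $w$-module. If $M$ is an $S$-SM-module and $\varphi:M\to M$ is a surjective $D$-module homomorphism, then $\varphi$ is an isomorphism.
   Context: Let $K$ be the quotient field of $D$; $I_v=(I^{-1})^{-1}$ with $I^{-1}=\{a\in K\mid aI\subseteq D\}$; $\mathrm{GV}(D)$ is the set of finitely generated ideals $J$ with $J_v=D$. For a torsion-free module $N$, $N_w=\{x\in N\otimes K\mid xJ\subseteq N\text{ for some }J\in\mathrm{GV}(D)\}$; $N$ is a $w$-module if $N_w=N$. A submodule $N$ of $M$ is $S$-$w$-finite if there exist $s\in S$ and a finitely generated submodule $F$ of $M$ with $Ns\subseteq F_w\subseteq N_w$; $M$ is an $S$-SM-module if every $w$-submodule ($L_w=L$) of $M$ is $S$-$w$-finite. *)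

(* Defs.v *)
From HB Require Import structures.
From mathcomp Require Import all_boot all_order all_algebra.
From mathcomp Require Import fraction.
Set Implicit Arguments. Unset Strict Implicit. Unset Printing Implicit Defensive.
Import Order.TTheory GRing.Theory Num.Theory.
Local Open Scope ring_scope.

Section Defs.
Variable D : idomainType.
Local Notation K := {fraction D}.
Local Notation inD x := (exists d : D, x = (FracField.tofrac d)).

Definition ideal_span (gs : seq D) (x : D) : Prop :=
  exists rs : seq D, x = \sum_(i < size gs) rs`_i * gs`_i.

Definition frac_inv (I : K -> Prop) (a : K) : Prop :=
  forall i, I i -> inD (a * i).

Definition ideal_in_K (J : D -> Prop) (x : K) : Prop :=
  exists j, J j /\ x = FracField.tofrac j.

Definition v_closure (J : D -> Prop) : K -> Prop :=
  frac_inv (frac_inv (ideal_in_K J)).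

Definition GV (J : D -> Prop) : Prop :=
  (exists gs : seq D, forall x, J x <-> ideal_span gs x) /\
  (forall x : K, v_closure J x <-> inD x).

Definition multiplicative_subset (S : D -> Prop) : Prop :=
  S 1 /\ (forall a b, S a -> S b -> S (a * b)) /\ ~ S 0.

Variable M : lmodType D.

Definition torsion_free : Prop :=
  forall (d : D) (m : M), d *: m = 0 -> d = 0 \/ m = 0.

Definition submodule (N : M -> Prop) : Prop :=
  N 0 /\ (forall x y, N x -> N y -> N (x + y)) /\
  (forall (d : D) x, N x -> N (d *: x)).

Definition span_mod (fs : seq M) (x : M) : Prop :=
  exists rs : seq D, x = \sum_(i < size fs) rs`_i *: fs`_i.

(* For a torsion-free M, elements of M (x) K are the fractions m/d (d != 0),
   with m/d = m'/d' iff d' m = d m'.  For a submodule N, N (x) K is the set of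
   fractions m'/d' with m' in N.  For x = m'/d' and j in D, x j lies in N iff
   j m' = d' n for some n in N.
   [in_w N m d] means: the element m/d of M (x) K lies in N_w. *)
Definition in_w (N : M -> Prop) (m : M) (d : D) : Prop :=
  d != 0 /\
  exists (m' : M) (d' : D), N m' /\ d' != 0 /\ d' *: m = d *: m' /\
    exists J, GV J /\ forall j, J j -> exists n, N n /\ d' *: n = j *: m'.

(* [in_sub N m d] : the element m/d of M (x) K lies in N (i.e. equals n/1). *)
Definition in_sub (N : M -> Prop) (m : M) (d : D) : Prop :=
  exists n, N n /\ d *: n = m.

(* N is a w-submodule: N_w = N (N subset N_w always holds) *)
Definition w_closed (N : M -> Prop) : Prop :=
  forall m d, in_w N m d -> in_sub N m d.

Definition w_module : Prop := w_closed (fun _ => True).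

Definition S_w_finite (S : D -> Prop) (N : M -> Prop) : Prop :=
  exists s, S s /\ exists fs : seq M,
    (forall n, N n -> in_w (span_mod fs) (s *: n) 1) /\
    (forall m d, in_w (span_mod fs) m d -> in_w N m d).

Definition S_SM_module (S : D -> Prop) : Prop :=
  forall L, submodule L -> w_closed L -> S_w_finite S L.

End Defs.

(* Main.v *)
Require Import Defs.
From HB Require Import structures.
From mathcomp Require Import all_boot all_order all_algebra.
From mathcomp Require Import fraction.
Local Open Scope ring_scope.
Import GRing.Theory.

Section Aux.
Variable D : idomainType.
Variable M : lmodType D.
Variable phi : {linear M -> M}.

Lemma itD n x y : iter n phi (x + y) = iter n phi x + iter n phi y.
Proof. by elim: n => //= n IH; rewrite IH linearD. Qed.

Lemma itZ n (a : D) x : iter n phi (a *: x) = a *: iter n phi x.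
Proof. by elim: n => //= n IH; rewrite IH linearZ. Qed.

Lemma it0 n : iter n phi 0 = 0.
Proof. by elim: n => //= n IH; rewrite IH linear0. Qed.

Lemma it_mono n m x : iter n phi x = 0 -> (n <= m)%N -> iter m phi x = 0.
Proof.
move=> h hnm; rewrite -(subnK hnm) iterD h; exact: it0.
Qed.

Arguments it_mono {n m x}.

Definition Lk (x : M) : Prop := exists n, iter n phi x = 0.

Lemma bound (P : nat -> nat -> Prop) :
  (forall k N N', (N <= N')%N -> P k N -> P k N') -> forall n,
  (forall k, (k < n)%N -> exists N, P k N) -> exists N, forall k, (k < n)%N -> P k N.
Proof.
move=> mono; elim=> [|n IH] h; first by exists 0%N.
have [N1 H1] : exists N, forall k, (k < n)%N -> P k N.
  by apply: IH => k hk; apply: h; apply: ltnW.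
have [N2 H2] := h n (ltnSn n).
exists (maxn N1 N2) => k; rewrite ltnS leq_eqVlt => /orP [/eqP ->|hk].
  by apply: mono H2; apply: leq_maxr.
by apply: (mono _ N1); [apply: leq_maxl | apply: H1].
Qed.

Lemma ispan_nth (gs : seq D) k : (k < size gs)%N -> ideal_span gs gs`_k.
Proof.
move=> hk; exists (mkseq (fun i => ((i == k) : nat)%:R) (size gs)).
rewrite (bigD1 (Ordinal hk)) //= nth_mkseq // eqxx mul1r big1 ?addr0 // => i hi.
rewrite nth_mkseq //.
have -> : (nat_of_ord i == k) = false.
  apply/negbTE; move: hi; apply: contra => /eqP h; apply/eqP/val_inj; exact: h.
by rewrite /= mul0r.
Qed.

Arguments ispan_nth {gs k}.

Lemma mspan_nth (fs : seq M) k : (k < size fs)%N -> span_mod fs fs`_k.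
Proof.
move=> hk; exists (mkseq (fun i => ((i == k) : nat)%:R) (size fs)).
rewrite (bigD1 (Ordinal hk)) //= nth_mkseq // eqxx scale1r big1 ?addr0 // => i hi.
rewrite nth_mkseq //.
have -> : (nat_of_ord i == k) = false.
  apply/negbTE; move: hi; apply: contra => /eqP h; apply/eqP/val_inj; exact: h.
by rewrite /= scale0r.
Qed.

Arguments mspan_nth {fs k}.

Lemma mspanZ (fs : seq M) (a : D) x : span_mod fs x -> span_mod fs (a *: x).
Proof.
case=> rs ->; exists (mkseq (fun i => a * rs`_i) (size fs)).
rewrite scaler_sumr; apply: eq_bigr => i _; by rewrite nth_mkseq // scalerA.
Qed.

Arguments mspanZ {fs a x}.

Lemma GV_True : GV (fun _ : D => True).
Proof.
split.
  exists [:: 1] => x; split => // _; exists [:: x].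
  by rewrite big_ord1 /= mulr1.
move=> x; split.
  move=> H; have h1 : frac_inv (ideal_in_K (fun _ : D => True)) 1.
    move=> k [j [_ ->]]; exists j; by rewrite mul1r.
  have [a Ha] := H 1 h1; by exists a; rewrite -Ha mulr1.
case=> a -> i Hi.
have [b Hb] := Hi (FracField.tofrac 1) (ex_intro _ 1 (conj I erefl)).
rewrite tofrac1 mulr1 in Hb; rewrite Hb -tofracM; by exists (a * b).
Qed.

Lemma GV_unit (J : D -> Prop) (d : D) : GV J -> (forall j, J j -> j = 0) ->
  d != 0 -> exists e, e * d = 1.
Proof.
move=> [_ HG] HJ dn0.
have v1 : v_closure J 1 by apply/HG; exists 1; rewrite tofrac1.
have hi : frac_inv (ideal_in_K J) (FracField.tofrac d)^-1.
  move=> k [j [Jj ->]]; rewrite (HJ j Jj) tofrac0 mulr0; exists 0; by rewrite tofrac0.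
have [e He] := v1 _ hi.
exists e; apply/eqP; rewrite -tofrac_eq tofracM -He tofrac1 mul1r mulVf //.
by rewrite tofrac_eq0.
Qed.

Arguments GV_unit {J d}.

Hypothesis tf : torsion_free M.

Lemma tf_cancel (d : D) (x y : M) : d != 0 -> d *: x = d *: y -> x = y.
Proof.
move=> dn0 h; have : d *: (x - y) = 0 by rewrite scalerBr h subrr.
case/tf => [/eqP|/eqP]; [by rewrite (negbTE dn0) | by rewrite subr_eq0 => /eqP].
Qed.

Arguments tf_cancel {d x y}.

Lemma tf_zero (d : D) (x : M) : d != 0 -> d *: x = 0 -> x = 0.
Proof. move=> dn0 h; apply: (tf_cancel dn0); by rewrite h scaler0. Qed.

Arguments tf_zero {d x}.

Lemma Lk_sub : submodule Lk.
Proof.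
split; first by exists 0%N.
split.
  move=> x y [n hn] [m hm]; exists (maxn n m); rewrite itD.
  rewrite (it_mono hn (leq_maxl n m)) (it_mono hm (leq_maxr n m)) addr0 //.
move=> d x [n hn]; exists n; by rewrite itZ hn scaler0.
Qed.

Hypothesis wM : w_module M.

Lemma Lk_w : w_closed Lk.
Proof.
move=> m d [dn0 [m' [d' [Lm' [d'n0 [e [J [GVJ HJ]]]]]]]].
have [n0 [_ hn0]] : in_sub (fun _ => True) m d.
  apply: wM; split => //; exists m', d'; split => //; split => //; split => //.
  exists J; split => // j Jj; have [n [_ hn]] := HJ j Jj; by exists n.
exists n0; split => //.
have e1 : d' *: n0 = m'.
  apply: (tf_cancel dn0); by rewrite scalerA mulrC -scalerA hn0 e.
have Jn0 : forall j, J j -> Lk (j *: n0).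
  move=> j Jj; have [n [Ln hn]] := HJ j Jj.
  have -> : j *: n0 = n.
    apply: (tf_cancel d'n0); by rewrite hn -e1 !scalerA mulrC.
  exact: Ln.
case: (GVJ) => [[gs Hgs] _].
have [N HN] := @bound (fun k N => iter N phi (gs`_k *: n0) = 0)
   (fun k N N' hN h => it_mono h hN) (size gs)
   (fun k hk => Jn0 _ (proj2 (Hgs _) (ispan_nth hk))).
case: (eqVneq (iter N phi n0) 0) => [h|h]; first by exists N.
have g0 : forall k, (k < size gs)%N -> gs`_k = 0.
  move=> k hk; have := HN k hk; rewrite itZ; case/tf => // h'; by rewrite h' eqxx in h.
have J0 : forall j, J j -> j = 0.
  move=> j /Hgs [rs ->]; apply: big1 => i _; by rewrite g0 // mulr0.
have [e' he'] := GV_unit GVJ J0 d'n0.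
case: Lm' => N' hN'; exists N'.
by rewrite -(scale1r n0) -he' -scalerA e1 itZ hN' scaler0.
Qed.

End Aux.
Arguments tf_zero {D M} tf {d x}.
Arguments it_mono {D M phi n m x}.
Arguments Lk {D M}.
Arguments Lk_sub {D M}.
Arguments Lk_w {D M phi}.
Arguments mspan_nth {D M fs k}.
Arguments mspanZ {D M fs a x}.
Arguments bound P : clear implicits.

Theorem proposition3p10 (D : idomainType) (S : D -> Prop) (M : lmodType D)
    (phi : {linear M -> M}) :
  multiplicative_subset S ->
  torsion_free M -> w_module M ->
  S_SM_module M S ->
  (forall y : M, exists x : M, phi x = y) ->
  bijective phi.
Proof.
move=> [S1 [Smul S0]] tf wM SM surj.
have [s [Ss [fs [H1 H2]]]] := SM (Lk phi) (Lk_sub phi) (Lk_w tf wM).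
have sn0 : s != 0 by apply/eqP => h; apply: S0; rewrite -h.
have fsL : forall k, (k < size fs)%N -> Lk phi fs`_k.
  move=> k hk.
  have : in_w (span_mod fs) fs`_k 1.
    split; first exact: oner_neq0.
    exists fs`_k, 1; split; first exact: mspan_nth.
    split; first exact: oner_neq0.
    split => //; exists (fun _ => True); split; first exact: GV_True.
    move=> j _; exists (j *: fs`_k); split; last by rewrite scale1r.
    by apply: mspanZ; apply: mspan_nth.
  move/H2 => [_ [m' [d' [[N hN] [d'n0 [e _]]]]]].
  exists N; apply: (tf_zero tf d'n0); by rewrite -itZ e scale1r.
have [N HN] := @bound (fun k N => iter N phi fs`_k = 0)
   (fun k N N' hN h => it_mono h hN) (size fs) fsL.
have spanN : forall x, span_mod fs x -> iter N phi x = 0.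
  move=> x [rs ->]; apply: (big_ind (fun y => iter N phi y = 0)).
  - exact: it0.
  - by move=> a b ha hb; rewrite itD ha hb addr0.
  - by move=> i _; rewrite itZ HN // scaler0.
have surjN : forall n y, exists z, iter n phi z = y.
  elim=> [|n IH] y; first by exists y.
  have [y1 <-] := surj y; have [z hz] := IH y1; exists z; by rewrite iterS hz.
have ker0 : forall x, phi x = 0 -> x = 0.
  move=> x hx; have [y hy] := surjN N x.
  have Ly : Lk phi y by exists N.+1; rewrite iterS hy.
  have [_ [m' [d' [sm' [d'n0 [e _]]]]]] := H1 y Ly.
  have := spanN _ sm'; rewrite -(scale1r m') -e !itZ hy.
  by move/(tf_zero tf d'n0)/(tf_zero tf sn0).
have inj : injective phi.
  move=> x y h; apply/eqP; rewrite -subr_eq0; apply/eqP; apply: ker0.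
  by rewrite linearB h subrr.
have surjb : forall y, exists x, phi x == y.
  by move=> y; have [x hx] := surj y; exists x; apply/eqP.
exists (fun y => xchoose (surjb y)).
  move=> x; apply: inj; apply/eqP; exact: (xchooseP (surjb (phi x))).
move=> y; apply/eqP; exact: (xchooseP (surjb y)).
Qed.
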